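(* Let $K$ be a perfect field, $k\subset K$ a subfield, $\lambda\in\operatorname{Emb}(K)$ with $\lambda^G=\{\sigma_1\lambda,\dots,\sigma_n\lambda\}$ ($\sigma_j\in G$, $n$ finite), and let $\overline{\lambda}$ be an extension of $\lambda$ to $\overline{K}$. Let $\alpha_1,\dots,\alpha_n$ be a basis of $K(\lambda)$ over $K$, define $\lambda_i:K\to K$ by $\lambda(x)=\sum_i\lambda_i(x)\alpha_i$, and $\beta_{ijk}\in K$ by $\alpha_i\alpha_j=\sum_k\beta_{ijk}\alpha_k$. For each $i$ write $\lambda_i=\sum_j a^{(i)}_j\sigma_j\lambda$ with $a^{(i)}_j\in\overline{K}$, and set $\overline{\lambda}_i=\sum_j a^{(i)}_j\sigma_j\overline{\lambda}:\overline{K}\to\overline{K}$. Then $\overline{\lambda}=\sum_i\overline{\lambda}_i\alpha_i$, and for all $b,c\in\overline{K}$, $\overline{\lambda}_k(bc)=\sum_{i,j}\overline{\lambda}_i(b)\overline{\lambda}_j(c)\beta_{ijk}$.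
   Context: $\overline{K}$ is a fixed algebraic closure of $K$. $\operatorname{Emb}(K)$ is the set of $k$-linear field embeddings $K\to\overline{K}$; $G=\operatorname{Aut}(\overline{K}/K)$ acts by left composition, with orbits $\lambda^G$. $K(\lambda)$ is the composite of $K$ and $\lambda(K)$ in $\overline{K}$, of degree $n$ over $K$. The coefficients $a^{(i)}_j$ exist and are unique since the distinct embeddings $\sigma_j\lambda$ are $\overline{K}$-linearly independent and each $\lambda_i$ is a $\overline{K}$-linear combination of them.
   Formalization: One of the σⱼ ∈ G is the identity automorphism of $\overline{K}$, so that λ itself appears in the orbit list as σⱼλ. The statement above fails without it. *)

(* Defs.v *)
From HB Require Import structures.
From mathcomp Require Import all_boot all_order all_algebra.
Set Implicit Arguments. Unset Strict Implicit. Unset Printing Implicit Defensive.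
Import Order.TTheory GRing.Theory Num.Theory.
Local Open Scope ring_scope.

Definition perfect_field (F : fieldType) : Prop :=
  forall p : nat, p \in [pchar F] -> forall x : F, exists y : F, y ^+ p = x.

Definition is_subfield (F : fieldType) (S : F -> Prop) : Prop :=
  [/\ S 0, S 1 &
      forall x y, S x -> S y -> [/\ S (x - y), S (x * y) & S x^-1]].

Definition algebraic_over (K L : fieldType) (iota : K -> L) : Prop :=
  forall x : L, exists p : {poly K}, p != 0 /\ root (map_poly iota p) x.

(* The composite K(lambda) of iota(K) and lambda(K) inside Kbar:
   the smallest subfield of Kbar containing both. *)
Definition compositum (K L : fieldType) (iota lam : K -> L) (x : L) : Prop :=
  forall S : L -> Prop, is_subfield S ->
    (forall a, S (iota a)) -> (forall a, S (lam a)) -> S x.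

Definition in_Gal (K L : fieldType) (iota : K -> L) (sigma : {rmorphism L -> L})
  : Prop := bijective sigma /\ forall a : K, sigma (iota a) = iota a.

Definition ext_coord (L : fieldType) (n : nat) (a : 'I_n -> 'I_n -> L)
  (sigma : 'I_n -> {rmorphism L -> L}) (lb : L -> L) (i : 'I_n) (y : L) : L :=
  \sum_(j < n) a i j * sigma j (lb y).

(* Main.v *)
Require Import Defs.
From HB Require Import structures.
From mathcomp Require Import all_boot all_order all_algebra.
Import Order.TTheory GRing.Theory Num.Theory.
Local Open Scope ring_scope.

From mathcomp Require Import ring.

Lemma dedekind (K L : fieldType) (I : eqType) (f : I -> K -> L)
 (fM : forall j x y, f j (x*y) = f j x * f j y) (f1 : forall j, f j 1 = 1)
 (finj : forall j j', (forall x, f j x = f j' x) -> j = j') :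
 forall (s : seq I), uniq s -> forall c : I -> L,
 (forall x, \sum_(j <- s) c j * f j x = 0) -> forall j, j \in s -> c j = 0.
Proof.
elim=> [|j1 s IH] //= /andP[j1s us] c H.
have Hs: forall j, j \in s -> c j = 0.
  move=> j js.
  have Hy: forall y, c j * (f j y - f j1 y) = 0.
    move=> y. apply: (IH us (fun j => c j * (f j y - f j1 y))) => // x.
    have := H (y * x); have := H x.
    rewrite !big_cons => Hx Hyx.
    move/eqP: Hx; rewrite addrC addr_eq0 => /eqP Hx.
    move/eqP: Hyx; rewrite addrC addr_eq0 => /eqP Hyx.
    have ->: \sum_(j <- s) c j * (f j y - f j1 y) * f j x =
      \sum_(j <- s) c j * f j (y * x) - f j1 y * \sum_(j <- s) c j * f j x.
      by rewrite mulr_sumr -sumrB; apply: eq_bigr => i _; rewrite fM; ring.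
    rewrite Hx Hyx fM; ring.
  case: (eqVneq (c j) 0) => // cj0.
  have jj1: j = j1.
    apply: finj => y; apply/eqP; rewrite -subr_eq0; apply/eqP.
    by apply: (mulfI cj0); rewrite Hy mulr0.
  by rewrite -jj1 js in j1s.
move=> j; rewrite inE => /orP[/eqP->|]; last exact: Hs.
have := H 1; rewrite big_cons big_seq big1 ?addr0 ?f1 ?mulr1 //.
by move=> i /Hs ->; rewrite mul0r.
Qed.

Lemma ex3 (V : zmodType) n (F : 'I_n -> 'I_n -> 'I_n -> V) :
  \sum_(l < n) \sum_(i < n) \sum_(i' < n) F l i i' =
  \sum_(i < n) \sum_(i' < n) \sum_(l < n) F l i i'.
Proof. rewrite exchange_big; apply: eq_bigr => i _; exact: exchange_big. Qed.

Lemma ex4 (V : zmodType) n (F : 'I_n -> 'I_n -> 'I_n -> 'I_n -> V) :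
  \sum_(j < n) \sum_(j' < n) \sum_(i < n) \sum_(i' < n) F j j' i i' =
  \sum_(i < n) \sum_(i' < n) \sum_(j < n) \sum_(j' < n) F j j' i i'.
Proof.
rewrite (eq_bigr (fun j => \sum_(i < n) \sum_(i' < n) \sum_(j' < n) F j j' i i')).
  exact: ex3.
by move=> j _; exact: ex3.
Qed.

Theorem lemma3p12
  (K : fieldType) (Kbar : closedFieldType) (iota : {rmorphism K -> Kbar})
  (Kbar_alg : algebraic_over iota)
  (K_perfect : perfect_field K)
  (kS : K -> Prop) (k_sub : is_subfield kS)
  (lam : {rmorphism K -> Kbar})
  (lam_klin : forall c x : K, kS c -> lam (c * x) = iota c * lam x)
  (n : nat) (sigma : 'I_n -> {rmorphism Kbar -> Kbar})
  (sigma_G : forall j, in_Gal iota (sigma j))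
  (orbit_uniq : forall j j', (forall x, sigma j (lam x) = sigma j' (lam x)) -> j = j')
  (orbit_all : forall tau : {rmorphism Kbar -> Kbar}, in_Gal iota tau ->
      exists j, forall x, tau (lam x) = sigma j (lam x))
  (sigma_id : exists j0, forall y, sigma j0 y = y)
  (lb : {rmorphism Kbar -> Kbar}) (lb_ext : forall x : K, lb (iota x) = lam x)
  (alpha : 'I_n -> Kbar)
  (alpha_in : forall i, compositum iota lam (alpha i))
  (alpha_free : forall c : 'I_n -> K,
      \sum_(i < n) iota (c i) * alpha i = 0 -> forall i, c i = 0)
  (alpha_span : forall y, compositum iota lam y ->
      exists c : 'I_n -> K, y = \sum_(i < n) iota (c i) * alpha i)
  (lamc : 'I_n -> K -> K)
  (lamc_def : forall x, lam x = \sum_(i < n) iota (lamc i x) * alpha i)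
  (beta : 'I_n -> 'I_n -> 'I_n -> K)
  (beta_def : forall i j, alpha i * alpha j = \sum_(k < n) iota (beta i j k) * alpha k)
  (a : 'I_n -> 'I_n -> Kbar)
  (a_def : forall i x, iota (lamc i x) = \sum_(j < n) a i j * sigma j (lam x)) :
  (forall y, lb y = \sum_(i < n) ext_coord a sigma lb i y * alpha i) /\
  (forall (b c : Kbar) (k : 'I_n),
      ext_coord a sigma lb k (b * c) =
      \sum_(i < n) \sum_(j < n)
         ext_coord a sigma lb i b * ext_coord a sigma lb j c * iota (beta i j k)).
Proof.
set f := fun j x => sigma j (lam x).
have fM : forall j x y, f j (x * y) = f j x * f j y by move=> j x y; rewrite /f !rmorphM.
have f1 : forall j, f j 1 = 1 by move=> j; rewrite /f !rmorph1.
have finj : forall j j', (forall x, f j x = f j' x) -> j = j' by [].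
have ded : forall c : 'I_n -> Kbar, (forall x, \sum_(j < n) c j * f j x = 0) -> forall j, c j = 0.
  move=> c Hc j; apply: (@dedekind K Kbar _ f fM f1 finj _ (index_enum_uniq 'I_n) c Hc).
  by rewrite mem_index_enum.
have gf : forall j x, sigma j (lb (iota x)) = f j x by move=> j x; rewrite lb_ext.
have [j0 Hj0] := sigma_id.
split.
  have Hd : forall j, \sum_(i < n) a i j * alpha i = (j == j0)%:R.
    move=> j; apply/eqP; rewrite -subr_eq0; apply/eqP.
    apply: (ded (fun j => \sum_(i < n) a i j * alpha i - (j == j0)%:R)) => x.
    under eq_bigr => i _ do rewrite mulrBl.
    rewrite sumrB.
    have ->: \sum_(i < n) (i == j0)%:R * f i x = lam x.
      rewrite (bigD1 j0) //= eqxx mul1r big1 ?addr0; first by rewrite /f Hj0.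
      by move=> i /negbTE ->; rewrite mul0r.
    rewrite lamc_def; apply/eqP; rewrite subr_eq0; apply/eqP.
    under eq_bigr => i _ do rewrite mulr_suml.
    rewrite exchange_big /=; apply: eq_bigr => i _.
    rewrite a_def mulr_suml; apply: eq_bigr => l _; rewrite /f; ring.
  move=> y; rewrite /ext_coord.
  under eq_bigr => i _ do rewrite mulr_suml.
  rewrite exchange_big /=.
  rewrite (eq_bigr (fun j => (\sum_(i<n) a i j * alpha i) * sigma j (lb y))); last first.
    by move=> j _; rewrite mulr_suml; apply: eq_bigr => i _; ring.
  under eq_bigr => j _ do rewrite Hd.
  rewrite (bigD1 j0) //= eqxx mul1r big1 ?addr0 ?Hj0 //.
  by move=> i /negbTE ->; rewrite mul0r.
move=> b c k.
set C := fun j j' => (j == j')%:R * a k j -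
  \sum_(i < n) \sum_(i' < n) a i j * a i' j' * iota (beta i i' k).
have key : forall u v : 'I_n -> Kbar,
  \sum_(j < n) a k j * (u j * v j) - \sum_(i < n) \sum_(i' < n)
    (\sum_(j < n) a i j * u j) * (\sum_(j' < n) a i' j' * v j') * iota (beta i i' k)
  = \sum_(j < n) \sum_(j' < n) C j j' * u j * v j'.
  move=> u v; rewrite /C.
  under [RHS]eq_bigr => j _ do under eq_bigr => j' _ do rewrite !mulrBl.
  under [RHS]eq_bigr => j _ do rewrite sumrB.
  rewrite sumrB; congr (_ - _).
    apply: eq_bigr => j _; rewrite (bigD1 j) //= eqxx big1 ?addr0.
    by rewrite mul1r mulrA.
    by move=> j' Hj'; rewrite eq_sym (negbTE Hj') !mul0r.
  transitivity (\sum_(i < n) \sum_(i' < n) \sum_(j < n) \sum_(j' < n)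
     a i j * u j * (a i' j' * v j') * iota (beta i i' k)).
    apply: eq_bigr => i _; apply: eq_bigr => i' _.
    rewrite big_distrlr mulr_suml; apply: eq_bigr => j _; by rewrite mulr_suml.
  rewrite -ex4; apply: eq_bigr => j _; apply: eq_bigr => j' _.
  rewrite !mulr_suml; apply: eq_bigr => i _; rewrite !mulr_suml.
  apply: eq_bigr => i' _; ring.
have HK : forall x y, iota (lamc k (x * y)) = \sum_(i < n) \sum_(i' < n)
    iota (lamc i x) * iota (lamc i' y) * iota (beta i i' k).
  move=> x y.
  pose cc := fun l => lamc l (x * y) - \sum_(i < n) \sum_(i' < n)
     lamc i x * lamc i' y * beta i i' l.
  suff Hz : \sum_(l < n) iota (cc l) * alpha l = 0.
    have /eqP := alpha_free cc Hz k; rewrite /cc subr_eq0 => /eqP ->.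
    rewrite rmorph_sum; apply: eq_bigr => i _; rewrite rmorph_sum.
    by apply: eq_bigr => i' _; rewrite !rmorphM.
  rewrite /cc; under eq_bigr => l _ do rewrite rmorphB mulrBl.
  rewrite sumrB -lamc_def rmorphM !lamc_def big_distrlr /=.
  apply/eqP; rewrite subr_eq0; apply/eqP.
  under [RHS]eq_bigr => l _ do rewrite rmorph_sum mulr_suml.
  under [RHS]eq_bigr => l _ do under eq_bigr => i _ do rewrite rmorph_sum mulr_suml.
  rewrite ex3; apply: eq_bigr => i _; apply: eq_bigr => i' _.
  have ->: iota (lamc i x) * alpha i * (iota (lamc i' y) * alpha i') =
    iota (lamc i x) * iota (lamc i' y) * (alpha i * alpha i') by ring.
  rewrite beta_def mulr_sumr; apply: eq_bigr => l _; rewrite !rmorphM; ring.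
have HA : forall x y, \sum_(j < n) \sum_(j' < n) C j j' * f j x * f j' y = 0.
  move=> x y; rewrite -key; apply/eqP; rewrite subr_eq0; apply/eqP.
  rewrite (_ : \sum_(j < n) a k j * (f j x * f j y) = iota (lamc k (x * y))); last first.
    by rewrite a_def; apply: eq_bigr => j _; rewrite -fM.
  rewrite HK; apply: eq_bigr => i _; apply: eq_bigr => i' _; by rewrite !a_def.
have HC : forall j j', C j j' = 0.
  have H1 : forall x j', \sum_(j < n) C j j' * f j x = 0.
    move=> x; apply: (ded (fun j' => \sum_(j < n) C j j' * f j x)) => y.
    rewrite -[RHS](HA x y) [RHS]exchange_big /=; apply: eq_bigr => j' _.
    by rewrite mulr_suml.
  move=> j j'; apply: (ded (fun j => C j j')) => x; exact: H1.
apply/eqP; rewrite -subr_eq0; apply/eqP; rewrite /ext_coord.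
rewrite (eq_bigr (fun j => a k j * (sigma j (lb b) * sigma j (lb c)))); last first.
  by move=> j _; rewrite !rmorphM.
have := key (fun j => sigma j (lb b)) (fun j => sigma j (lb c)); rewrite /= => ->.
by apply: big1 => j _; apply: big1 => j' _; rewrite HC !mul0r.
Qed.
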